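(* Let $(a_n)_{n\geq 0}$ be a primary pseudo-polynomial and $f=\sum_{n\ge0}a_nx^n$ its generating series. Then for every positive integer $n$, the integer $\det H_n(f)$ is divisible by $$\prod_{\substack{p\le n-1\\ p \text{ prime}}} p^{\,n-p}.$$
   Context: A sequence of integers $(a_n)_{n\ge0}$ is a primary pseudo-polynomial if $a_{n+p}\equiv a_n \pmod p$ for every integer $n\ge 0$ and every prime $p$. For $n\ge1$, the $n$-th Hankel matrix of $f$ is $H_n(f)=(a_{i+j-2})_{1\le i,j\le n}$. *)

(* Defs.v *)
From mathcomp Require Import all_boot all_order all_algebra.
Set Implicit Arguments. Unset Strict Implicit. Unset Printing Implicit Defensive.
Import GRing.Theory Num.Theory.
Local Open Scope ring_scope.

Definition primary_pseudo_polynomial (a : nat -> int) : Prop :=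
  forall (n p : nat), prime p -> (a (n + p)%N = a n %[mod (p%:Z)])%Z.

(* n-th Hankel matrix (a_{i+j-2})_{1<=i,j<=n}, written with 0-based indices *)
Definition hankel (a : nat -> int) (n : nat) : 'M[int]_n :=
  \matrix_(i < n, j < n) a (i + j)%N.

(* Main.v *)
Require Import Defs.
From mathcomp Require Import all_boot all_order all_algebra.
Local Open Scope ring_scope.
Import GRing.Theory Num.Theory.

Lemma key (a : nat -> int) (n p : nat) : (0 < p)%N ->
  (forall k, (p%:Z %| a (k + p)%N - a k)%Z) ->
  ((p ^ (n - p))%N%:Z %| \det (hankel a n))%Z.
Proof.
move=> p0 Hp.
pose S : 'M[int]_n := \matrix_(i, k) ((k + p)%N == i)%:R.
pose C : 'M[int]_n := \matrix_(i, j)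
  (if (p <= i)%N then ((a (i + j)%N - a (i - p + j)%N) %/ p%:Z)%Z else a (i + j)%N).
pose d : 'rV[int]_n := \row_(i < n) (if (p <= i)%N then p%:Z else 1).
have E : (1 - S) *m hankel a n = diag_mx d *m C.
  apply/matrixP=> i j; rewrite mulmxBl mul1mx mul_diag_mx [in LHS]mxE [in RHS]mxE.
  rewrite [hankel a n i j]mxE [C i j]mxE [d 0 i]mxE.
  rewrite [X in _ + X]mxE.
  have -> : (S *m hankel a n) i j = if (p <= i)%N then a (i - p + j)%N else 0.
    rewrite mxE; case: ifP => Hpi.
      have Hk : (i - p < n)%N by rewrite (leq_ltn_trans (leq_subr _ _)).
      rewrite (bigD1 (Ordinal Hk)) //= !mxE /= subnK // eqxx mul1r.
      rewrite big1 ?addr0 // => k /eqP Hk2; rewrite !mxE.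
      case: eqP => [Hke|]; last by rewrite mul0r.
      by exfalso; apply: Hk2; apply: val_inj => /=; rewrite -Hke addnK.
    rewrite big1 // => k _; rewrite !mxE; case: eqP => [Hke|]; last by rewrite mul0r.
    by move: Hpi; rewrite -Hke leq_addl.
  case: ifP => Hpi; last by rewrite subr0 mul1r.
  rewrite mulrC divzK //.
  have := Hp (i - p + j)%N; congr (_ %| (a _ - _))%Z.
  by rewrite addnAC subnK.
have detL : \det (1 - S) = 1.
  rewrite det_trig.
    rewrite big1 // => i _; rewrite !mxE eqxx /=.
    have -> : ((i + p)%N == i) = false by rewrite -[X in (_ == X)%N]addn0 eqn_add2l eqn0Ngt p0.
    by rewrite subr0.
  apply/forallP => i; apply/forallP => j; apply/implyP => Hij.
  rewrite !mxE; have -> : (i == j) = false by apply/negbTE; rewrite neq_ltn Hij.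
  have -> : ((j + p)%N == i) = false.
    apply/negbTE; rewrite neq_ltn; apply/orP; right.
    by rewrite (leq_trans Hij) // leq_addr.
  by rewrite subr0.
have detD : \det (diag_mx d) = (p ^ (n - p))%N%:Z.
  rewrite det_diag.
  transitivity (\prod_(0 <= i < n) (if (p <= i)%N then p%:Z else 1)).
    by rewrite big_mkord; apply: eq_bigr => i _; rewrite mxE.
  have [Hpn|Hpn] := leqP p n.
    rewrite (@big_cat_nat _ _ _ p) //= big1_seq ?mul1r; last first.
      move=> i /andP[_]; rewrite mem_index_iota => /andP[_ Hi]; case: ifP => // Hpi; move: (leq_trans Hi Hpi); by rewrite ltnn.
    rewrite (eq_big_seq (fun _ => p%:Z)); last first.
      by move=> i; rewrite mem_index_iota => /andP[-> _].
    rewrite big_const_nat.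
    elim: (n - p)%N => [|k IH] //=.
    by rewrite IH expnS PoszM.
  have -> : (n - p = 0)%N by apply/eqP; rewrite subn_eq0 ltnW.
  rewrite big1_seq // => i /andP[_]; rewrite mem_index_iota => /andP[_ Hi].
  by have -> : (p <= i)%N = false by apply/negbTE; rewrite -ltnNge (ltn_trans Hi).
have : \det (hankel a n) = (p ^ (n - p))%N%:Z * \det C.
  by rewrite -detD -det_mulmx -E det_mulmx detL mul1r.
move=> ->; exact: dvdz_mulr (dvdzz _).
Qed.

Lemma prod_dvd (k m : nat) (e : nat -> nat) :
  (forall p, (p < k)%N -> prime p -> (p ^ e p %| m)%N) ->
  (\prod_(p < k | prime p) p ^ e p %| m)%N.
Proof.
elim: k => [|k IH] H; first by rewrite big_ord0 dvd1n.
rewrite big_mkcond big_ord_recr /= -big_mkcond /=.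
have Hr := IH (fun p Hp => H p (ltnW Hp)).
case: ifP => pk; last by rewrite muln1.
have cop : coprime (\prod_(p < k | prime p) p ^ e p) (k ^ e k).
  rewrite coprimeXr // coprime_sym.
  apply: (big_ind (fun x => coprime k x)); first exact: coprimen1.
    by move=> x y; rewrite coprimeMr => -> ->.
  move=> i pi; rewrite coprimeXr // prime_coprime // dvdn_prime2 //.
  by rewrite neq_ltn ltn_ord orbT.
by rewrite Gauss_dvd // Hr H.
Qed.

Theorem lemma2 (a : nat -> int) (n : nat) :
  primary_pseudo_polynomial a -> (0 < n)%N ->
  ((\prod_(p < n | prime p) p ^ (n - p))%N%:Z %| \det (hankel a n))%Z.
Proof.
move=> Ha _.
rewrite /dvdz /=.
apply: prod_dvd => p _ pp.
have Hk : forall k, (p%:Z %| a (k + p)%N - a k)%Z.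
  by move=> k; rewrite -eqz_mod_dvd; apply/eqP; apply: Ha.
have := @key a n p (prime_gt0 pp) Hk; by rewrite /dvdz.
Qed.
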